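(* Let each directed channel of a fully connected network of $n$ processes be timely independently with the same probability $p<1$. In a direct channel (single-hop) Omega implementation, a leader can exist only if some process has a timely direct channel to every other process. Then the probability of leader existence in any direct channel Omega implementation, i.e. the probability that there exists a process whose $n-1$ outgoing channels are all timely, approaches $0$ exponentially fast as $n\to\infty$.
   Context: A network has $n$ processes and a directed channel from every process to every other process. Each directed channel is timely with probability $p$, independently of all other channels (the channels from $x$ to $y$ and from $y$ to $x$ are distinct and independent). A direct channel (single-hop) implementation of the Omega failure detector is one in which messages are delivered only over direct channels, so a process can be the leader only if it has a timely direct channel to every other process. *)

(* Defs.v *)
From mathcomp Require Import all_boot all_order all_algebra.
Set Implicit Arguments. Unset Strict Implicit. Unset Printing Implicit Defensive.
Import Order.TTheory GRing.Theory Num.Theory.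
Local Open Scope ring_scope.

(* Directed channels of the complete network on n processes: ordered pairs
   (x, y) of distinct processes; (x,y) is the channel from x to y. *)
Definition chan (n : nat) : finType := {e : 'I_n * 'I_n | e.1 != e.2}.

Definition config (n : nat) : finType := {ffun chan n -> bool}.

Definition weight (R : nzRingType) (n : nat) (p : R) (w : config n) : R :=
  \prod_(e : chan n) (if w e then p else 1 - p).

Definition prob (R : nzRingType) (n : nat) (p : R) (E : pred (config n)) : R :=
  \sum_(w : config n | E w) weight p w.

Definition leader_possible (n : nat) (w : config n) : bool :=
  [exists x : 'I_n, [forall e : chan n, ((val e).1 == x) ==> w e]].

(* Main.v *)
Require Import Defs.
From mathcomp Require Import all_boot all_order all_algebra.
From mathcomp Require Import ring lra.
Import Order.TTheory GRing.Theory Num.Theory.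
Local Open Scope ring_scope.

Lemma binom_lb (R : realFieldType) (p d : R) (n : nat) :
  0 <= p -> 0 <= d -> p ^+ n + n%:R * p ^+ n.-1 * d <= (p + d) ^+ n.
Proof.
move=> hp hd; elim: n => [|n IH]; first by rewrite !expr0 mul0r mul0r addr0.
have e : n%:R * p ^+ n.-1 * p = n%:R * p ^+ n.
  case: n {IH} => [|n]; first by rewrite !mul0r.
  by rewrite /= exprSr mulrA.
rewrite [in X in _ <= X]exprS.
have h1 : 0 <= p + d by lra.
apply: le_trans _ (ler_wpM2l h1 IH).
have h2 : 0 <= n%:R * p ^+ n.-1 * d * d.
  by rewrite !mulr_ge0 // exprn_ge0.
have -> : (p + d) * (p ^+ n + n%:R * p ^+ n.-1 * d) =
   p ^+ n.+1 + n%:R * p ^+ n.-1 * p * d + p ^+ n * d + n%:R * p ^+ n.-1 * d * d.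
  rewrite exprS; ring.
rewrite e /= -natr1 exprS; lra.
Qed.

Lemma prob_Ax (R : realFieldType) (p : R) (n : nat) (x : 'I_n) :
  0 <= p -> p <= 1 ->
  prob p (fun w : config n => [forall e : chan n, ((val e).1 == x) ==> w e]) <= p ^+ n.-1.
Proof.
move=> hp hp1.
pose G (e : chan n) (b : bool) : R :=
  if ((val e).1 == x) && ~~ b then 0 else (if b then p else 1 - p).
have -> : prob p (fun w : config n => [forall e : chan n, ((val e).1 == x) ==> w e])
   = \sum_(w : config n) \prod_(e : chan n) G e (w e).
  rewrite /prob big_mkcond /=; apply: eq_bigr => w _.
  case Hf: [forall e : chan n, ((val e).1 == x) ==> w e].
    move/forallP: Hf => H.
    rewrite /weight; apply: eq_bigr => e _; rewrite /G.
    by have := H e; case: ((val e).1 == x); case: (w e).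
  move/negbT: Hf; rewrite negb_forall => /existsP [e He].
  rewrite (bigD1 e) //= /G; move: He; case: ((val e).1 == x); case: (w e) => //= _.
  by rewrite mul0r.
rewrite -(bigA_distr_bigA (fun (e : chan n) (b : bool) => G e b)) /=.
have -> : \prod_(e : chan n) \sum_(b : bool) G e b =
          \prod_(e : chan n | (val e).1 == x) p.
  rewrite [RHS]big_mkcond /=; apply: eq_bigr => e _.
  rewrite big_bool /G /=; case: ((val e).1 == x) => /=; lra.
rewrite prodr_const; apply: ler_wiXn2l => //.
have -> : n.-1 = #|[set~ x]| by rewrite cardsC1 card_ord.
pose A := [pred e : chan n | (val e).1 == x].
apply: leq_trans (leq_imset_card (fun e : chan n => (val e).2) A).
apply: subset_leq_card; apply/subsetP => y; rewrite !inE => hy.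
have hxy : (x, y).1 != (x, y).2 by rewrite /= eq_sym.
apply/imsetP; exists (exist _ (x, y) hxy) => //.
by rewrite inE /=.
Qed.

Theorem theorem1 (R : realFieldType) (p : R) :
  0 <= p -> p < 1 ->
  exists (C r : R), 0 < r /\ r < 1 /\
    forall n : nat, prob p (@leader_possible n) <= C * r ^+ n.
Proof.
move=> hp hp1.
pose d := (1 - p) / 2.
have hd : 0 < d by rewrite /d; lra.
exists d^-1, (p + d); split; first by rewrite /d; lra.
split; first by rewrite /d; lra.
move=> n.
have wge : forall w : config n, 0 <= weight p w.
  move=> w; rewrite /weight; apply: prodr_ge0 => e _; case: (w e); lra.
have step1 : prob p (@leader_possible n) <=
   \sum_(x : 'I_n) prob p (fun w : config n => [forall e : chan n, ((val e).1 == x) ==> w e]).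
  rewrite /prob; under [X in _ <= X]eq_bigr => x _ do rewrite big_mkcond.
  rewrite exchange_big /= big_mkcond /=; apply: ler_sum => w _.
  rewrite big_mkcond /=.
  rewrite /leader_possible; case E: [exists x, _]; last first.
    by apply: sumr_ge0 => i _; case: ifP.
  move/existsP: E => [x0 Hx0].
  rewrite (bigD1 x0) //= Hx0 lerDl; apply: sumr_ge0 => i _; case: ifP => //.
have step2 : \sum_(x : 'I_n) prob p (fun w : config n => [forall e : chan n, ((val e).1 == x) ==> w e])
   <= n%:R * p ^+ n.-1.
  apply: (@le_trans _ _ (\sum_(x : 'I_n) p ^+ n.-1)).
    by apply: ler_sum => x _; exact: prob_Ax hp (ltW hp1).
  by rewrite sumr_const card_ord mulr_natl.
apply: (le_trans step1); apply: (le_trans step2).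
rewrite ler_pdivlMl //.
have := @binom_lb R p d n hp (ltW hd).
have := exprn_ge0 n hp.
have : 0 <= n%:R * p ^+ n.-1 by rewrite mulr_ge0 // exprn_ge0.
nra.
Qed.
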